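(* Consider a family, indexed by the number of qubits $n$, of parametrized $n$-qubit states $\widetilde{\rho} = \rho(\vec{\alpha})$ depending on a random variable $\vec{\alpha}$, and a POVM $\mathcal{M} = \{M_k\}_{k=1}^{|\mathcal{M}|}$ with $|\mathcal{M}| \in \mathcal{O}(\operatorname{poly}(n))$. Let $\mathbb{P}_{\vec{\alpha}} = (p_1(\vec{\alpha}), \dots, p_{|\mathcal{M}|}(\vec{\alpha}))$ with $p_k(\vec{\alpha}) = \operatorname{Tr}[\widetilde{\rho} M_k]$ be the outcome distribution. Assume the outcome probabilities exponentially concentrate: there exist $\vec{\alpha}$-independent numbers $\mu_k$ and $\beta \in \mathcal{O}(\exp(-n))$ such that for every $k$ and every $\delta' > 0$, $$\Pr_{\vec{\alpha}}\big(|p_k(\vec{\alpha}) - \mu_k| \geq \delta'\big) \leq \frac{\beta}{\delta'^2},$$ and let $\mathbb{P}_{\rm fixed} = (\mu_1, \dots, \mu_{|\mathcal{M}|})$. Let $N \in \mathcal{O}(\operatorname{poly}(n))$, and suppose a set $\mathcal{S}_N$ of $N$ i.i.d. samples is drawn, with probability $1/2$ each, either from $\mathbb{P}_{\vec{\alpha}}$ (hypothesis $\mathcal{H}_0$) or from $\mathbb{P}_{\rm fixed}$ (hypothesis $\mathcal{H}_1$). Then, with probability at least $1-\delta$ over the choice of $\vec{\alpha}$, where $\delta = |\mathcal{M}|\sqrt{\beta} \in \mathcal{O}(\exp(-n))$, every procedure deciding between $\mathcal{H}_0$ and $\mathcal{H}_1$ from $\mathcal{S}_N$ makes the right decision with probability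 at most $\frac{1}{2} + \varepsilon$, where $\varepsilon = \frac{N|\mathcal{M}|\beta^{1/4}}{4} \in \mathcal{O}(\exp(-n))$. In particular, $\mathbb{P}_{\vec{\alpha}}$ and $\mathbb{P}_{\rm fixed}$ are then statistically indistinguishable with $N$ samples.
   Context: A POVM is a finite set of positive semidefinite operators summing to the identity; measuring it on a state $\rho$ yields outcome $k$ with probability $\operatorname{Tr}[\rho M_k]$. Two distributions $\mathbb{P},\mathbb{P}'$ are called statistically indistinguishable with $N$ samples if, given $N$ i.i.d. samples drawn (with equal prior probability) all from $\mathbb{P}$ or all from $\mathbb{P}'$, no algorithm identifies the correct source with probability greater than $0.51$. Asymptotic notation refers to $n \to \infty$. *)

(* Defs.v *)
From HB Require Import structures.
From mathcomp Require Import all_boot all_order all_algebra.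
From mathcomp Require Import all_classical all_reals.
From mathcomp Require Import exp measure lebesgue_measure probability.
From mathcomp Require Import complex.

Set Implicit Arguments.
Unset Strict Implicit.
Unset Printing Implicit Defensive.

Import Order.TTheory GRing.Theory Num.Theory.
Local Open Scope ring_scope.

Section QDefs.
Variable R : realType.
Local Notation C := (R[i]).

Definition adjmx (m n : nat) (A : 'M[C]_(m, n)) : 'M[C]_(n, m) :=
  (map_mx Num.conj A)^T.

Definition psd (d : nat) (A : 'M[C]_d) : Prop :=
  forall v : 'cV[C]_d, 0 <= (adjmx v *m A *m v) 0 0.

Definition density (d : nat) (rho : 'M[C]_d) : Prop :=
  psd rho /\ \tr rho = 1.

Definition povm (d m : nat) (M : 'I_m -> 'M[C]_d) : Prop :=
  (forall k, psd (M k)) /\ \sum_(k < m) M k = 1%:M.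

(* outcome probability Tr[rho M_k] (real, since rho, M_k are psd) *)
Definition outcome_prob (d : nat) (rho M : 'M[C]_d) : R :=
  complex.Re (\tr (rho *m M)).

Definition is_distr (m : nat) (p : 'I_m -> R) : Prop :=
  (forall k, 0 <= p k) /\ \sum_(k < m) p k = 1.

Definition iid_prob (m N : nat) (p : 'I_m -> R) (s : {ffun 'I_N -> 'I_m}) : R :=
  \prod_(i < N) p (s i).

(* A (possibly randomized) decision procedure is f : samples -> [0,1],
   f s = probability of answering H0 on the sample tuple s. *)
Definition success_prob (m N : nat) (p0 p1 : 'I_m -> R)
    (f : {ffun 'I_N -> 'I_m} -> R) : R :=
  2^-1 * (\sum_(s : {ffun 'I_N -> 'I_m}) iid_prob p0 s * f s)
  + 2^-1 * (\sum_(s : {ffun 'I_N -> 'I_m}) iid_prob p1 s * (1 - f s)).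

Definition decision_rule (m N : nat) (f : {ffun 'I_N -> 'I_m} -> R) : Prop :=
  forall s, 0 <= f s <= 1.

End QDefs.

(* Main.v *)
Require Import Defs.
From HB Require Import structures.
From mathcomp Require Import all_boot all_order all_algebra.
From mathcomp Require Import all_classical all_reals.
From mathcomp Require Import exp measure lebesgue_measure probability.
From mathcomp Require Import complex.
From mathcomp Require Import sesquilinear spectral sequences measurable_realfun ring lra.

Import Order.TTheory GRing.Theory Num.Theory.
Local Open Scope ring_scope.

Set Implicit Arguments. Unset Strict Implicit. Unset Printing Implicit Defensive.

Section Det.
Variable R : realType.
Variables (m N : nat).
Implicit Types (p mu : 'I_m -> R).

Lemma sum_prod_ffun (F : 'I_N -> 'I_m -> R) :
  \sum_(s : {ffun 'I_N -> 'I_m}) \prod_(i < N) F i (s i) = \prod_(i < N) \sum_(k < m) F i k.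
Proof. by rewrite (bigA_distr_bigA F). Qed.

Lemma sum_iid p : \sum_(s : {ffun 'I_N -> 'I_m}) iid_prob p s = (\sum_(k < m) p k) ^+ N.
Proof. by rewrite /iid_prob (sum_prod_ffun (fun _ k => p k)) prodr_const card_ord. Qed.

Definition gtel p mu (j : nat) (s : {ffun 'I_N -> 'I_m}) : R :=
  \prod_(i < N) (if (i < j)%N then mu (s i) else p (s i)).

Definition htel p mu (j i : 'I_N) (k : 'I_m) : R :=
  if (i < j)%N then mu k else if i == j then p k - mu k else p k.

Lemma gtel_diff p mu (j : 'I_N) s :
  gtel p mu j s - gtel p mu j.+1 s = \prod_(i < N) htel p mu j i (s i).
Proof.
rewrite /gtel /htel (bigD1 j) //= [X in _ - X](bigD1 j) //= [X in _ = X](bigD1 j) //=.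
rewrite ltnn eqxx ltnSn.
rewrite (eq_bigr (fun i : 'I_N => if (i < j.+1)%N then mu (s i) else p (s i))); last first.
  move=> i /negbTE ij; rewrite ltnS (leq_eqVlt i).
  by have -> : (nat_of_ord i == nat_of_ord j) = false by apply/eqP => /val_inj e; rewrite e eqxx in ij.
rewrite [X in _ = _ * X](eq_bigr (fun i : 'I_N => if (i < j.+1)%N then mu (s i) else p (s i))); last first.
  move=> i /negbTE ij. rewrite ij ltnS (leq_eqVlt i).
  by have -> : (nat_of_ord i == nat_of_ord j) = false by apply/eqP => /val_inj e; rewrite e eqxx in ij.
by rewrite mulrBl.
Qed.

Lemma iid_tel p mu s :
  iid_prob p s - iid_prob mu s = \sum_(j < N) \prod_(i < N) htel p mu j i (s i).
Proof.
have -> : iid_prob p s = gtel p mu 0 s by apply: eq_bigr => i _.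
have -> : iid_prob mu s = gtel p mu N s by apply: eq_bigr => i _; rewrite ltn_ord.
rewrite -opprB -(telescope_sumr (fun j => gtel p mu j s) (leq0n N)) -sumrN big_mkord.
by apply: eq_bigr => j _; rewrite opprB gtel_diff.
Qed.

Lemma sum_absD p mu : is_distr p -> is_distr mu ->
  \sum_(s : {ffun 'I_N -> 'I_m}) `|iid_prob p s - iid_prob mu s|
    <= N%:R * \sum_(k < m) `|p k - mu k|.
Proof.
move=> [p0 p1] [mu0 mu1].
apply: (@le_trans _ _ (\sum_(s : {ffun 'I_N -> 'I_m}) \sum_(j < N) \prod_(i < N) `|htel p mu j i (s i)|)).
  apply: ler_sum => s _; rewrite iid_tel.
  apply: (le_trans (ler_norm_sum _ _ _)); apply: ler_sum => j _.
  by rewrite normr_prod.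
rewrite exchange_big /=.
rewrite (eq_bigr (fun _ => \sum_(k < m) `|p k - mu k|)).
  by rewrite sumr_const card_ord mulr_natl.
move=> j _; rewrite (sum_prod_ffun (fun i k => `|htel p mu j i k|)) (bigD1 j) //=.
have -> : \prod_(i < N | i != j) \sum_(k < m) `|htel p mu j i k| = 1.
  apply: big1 => i ij; rewrite /htel (negbTE ij).
  case: (boolP (i < j)%N) => c.
    by rewrite -mu1; apply: eq_bigr => k _; rewrite ger0_norm.
  by rewrite -p1; apply: eq_bigr => k _; rewrite ger0_norm.
by rewrite mulr1; apply: eq_bigr => k _; rewrite /htel ltnn eqxx.
Qed.

Lemma det_bound p mu (t : R) (f : {ffun 'I_N -> 'I_m} -> R) :
  is_distr p -> is_distr mu -> (forall k, `|p k - mu k| <= t) -> decision_rule f ->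
  success_prob p mu f <= 2^-1 + N%:R * m%:R * t / 4.
Proof.
move=> hp hm ht hf.
have sp : \sum_(s : {ffun 'I_N -> 'I_m}) iid_prob p s = 1 by rewrite sum_iid hp.2 expr1n.
have sm : \sum_(s : {ffun 'I_N -> 'I_m}) iid_prob mu s = 1 by rewrite sum_iid hm.2 expr1n.
pose D := fun s : {ffun 'I_N -> 'I_m} => iid_prob p s - iid_prob mu s.
have sD : \sum_(s : {ffun 'I_N -> 'I_m}) D s = 0 by rewrite /D sumrB sp sm subrr.
have succE : success_prob p mu f = 2^-1 + 2^-1 * \sum_(s : {ffun 'I_N -> 'I_m}) D s * (f s - 2^-1).
  rewrite /success_prob.
  have -> : \sum_(s : {ffun 'I_N -> 'I_m}) D s * (f s - 2^-1) = \sum_(s : {ffun 'I_N -> 'I_m}) iid_prob p s * f s - \sum_(s : {ffun 'I_N -> 'I_m}) iid_prob mu s * f s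
     - 2^-1 * \sum_(s : {ffun 'I_N -> 'I_m}) D s.
    rewrite mulr_sumr -!sumrB; apply: eq_bigr => s _; rewrite /D; ring.
  have -> : \sum_(s : {ffun 'I_N -> 'I_m}) iid_prob mu s * (1 - f s) = \sum_(s : {ffun 'I_N -> 'I_m}) iid_prob mu s - \sum_(s : {ffun 'I_N -> 'I_m}) iid_prob mu s * f s.
    by rewrite -sumrB; apply: eq_bigr => s _; ring.
  rewrite sD sm; ring.
have hsum : \sum_(s : {ffun 'I_N -> 'I_m}) D s * (f s - 2^-1) <= 2^-1 * \sum_(s : {ffun 'I_N -> 'I_m}) `|D s|.
  rewrite mulr_sumr; apply: ler_sum => s _.
  apply: (le_trans (ler_norm _)); rewrite normrM mulrC ler_wpM2r //.
  have /andP[f0 f1] := hf s.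
  rewrite ler_norml; apply/andP; split; lra.
have hD := sum_absD hp hm.
have hk : \sum_(k < m) `|p k - mu k| <= m%:R * t.
  apply: (le_trans (ler_sum _ (fun k _ => ht k))).
  by rewrite sumr_const card_ord mulr_natl.
have N0 : 0 <= N%:R :> R by [].
have : N%:R * \sum_(k < m) `|p k - mu k| <= N%:R * (m%:R * t) by rewrite ler_wpM2l.
rewrite succE; move: hsum hD; rewrite /D. 
set X := \sum_(s : {ffun 'I_N -> 'I_m}) _. set Y := \sum_(s : {ffun 'I_N -> 'I_m}) _. move=> h1 h2 h3.
have -> : N%:R * m%:R * t / 4 = 2^-1 * (2^-1 * (N%:R * (m%:R * t))) by field.
apply: lerD => //; rewrite ler_pM2l ?invr_gt0 //.
apply: (le_trans h1); rewrite ler_pM2l ?invr_gt0 //; exact: le_trans h2 h3.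
Qed.
End Det.

Section Mat.
Variable R : realType.
Local Notation C := (R[i]).
Variable d : nat.

Lemma adjmxE p q (A : 'M[C]_(p, q)) : adjmx A = (A ^t* )%sesqui.
Proof. by apply/matrixP => i j; rewrite !mxE. Qed.

Lemma adjmxD p q (A B : 'M[C]_(p, q)) : adjmx (A + B) = adjmx A + adjmx B.
Proof. by apply/matrixP => i j; rewrite !mxE rmorphD. Qed.

Lemma adjmxZ p q (c : C) (A : 'M[C]_(p, q)) : adjmx (c *: A) = Num.conj c *: adjmx A.
Proof. by apply/matrixP => i j; rewrite !mxE rmorphM. Qed.

Lemma adjmxK p q (A : 'M[C]_(p, q)) : adjmx (adjmx A) = A.
Proof. by apply/matrixP => i j; rewrite !mxE conjCK. Qed.

Definition qf (A : 'M[C]_d) (u v : 'cV[C]_d) : C := (adjmx u *m A *m v) 0 0.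

Lemma psd_real (A : 'M[C]_d) v : psd A -> Num.conj (qf A v v) = qf A v v.
Proof. by move=> hA; rewrite geC0_conj //; exact: hA. Qed.

Lemma qfDl A u u' v : qf A (u + u') v = qf A u v + qf A u' v.
Proof. by rewrite /qf adjmxD !mulmxDl mxE. Qed.
Lemma qfDr A u v v' : qf A u (v + v') = qf A u v + qf A u v'.
Proof. by rewrite /qf !mulmxDr mxE. Qed.
Lemma qfZl A c u v : qf A (c *: u) v = Num.conj c * qf A u v.
Proof. by rewrite /qf adjmxZ -!scalemxAl mxE. Qed.
Lemma qfZr A c u v : qf A u (c *: v) = c * qf A u v.
Proof. by rewrite /qf -!scalemxAr mxE. Qed.

Lemma psd_polar (A : 'M[C]_d) u v : psd A -> qf A v u = Num.conj (qf A u v).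
Proof.
move=> hA.
set a := qf A u u; set b := qf A v v; set x := qf A u v; set y := qf A v u.
have ra : Num.conj a = a by exact: psd_real.
have rb : Num.conj b = b by exact: psd_real.
have E1 : qf A (u + v) (u + v) = (a + b) + (x + y).
  by rewrite !qfDl !qfDr /a /b /x /y; ring.
have E2 : qf A (u + 'i *: v) (u + 'i *: v) = (a + b) + 'i * (x - y).
  rewrite !qfDl !qfDr !qfZl !qfZr conjCi -/a -/b -/x -/y.
  have -> : - 'i * ('i * b) = b by rewrite mulrA mulNr mulCii opprK mul1r.
  ring.
have h1 := psd_real (u + v) hA.
have h2 := psd_real (u + 'i *: v) hA.
rewrite E1 !rmorphD /= ra rb in h1.
rewrite E2 !(rmorphD, rmorphN, rmorphM) /= ra rb conjCi in h2.
move/addrI: h1 => h1; move/addrI: h2 => h2.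
have h3 : Num.conj y - Num.conj x = x - y.
  have ni : ('i : C) != 0 := neq0Ci _.
  apply: (mulfI ni); rewrite -h2; ring.
have : (x - Num.conj y) * 2 = 0.
  have -> : (x - Num.conj y) * 2 = ((x + y) - (Num.conj x + Num.conj y))
      + ((x - y) - (Num.conj y - Num.conj x)) by ring.
  by rewrite h1 h3 !subrr addr0.
move/eqP; rewrite mulf_eq0 pnatr_eq0 orbF subr_eq0 => /eqP ->.
by rewrite conjCK.
Qed.

Lemma adjmx_delta (i : 'I_d) : adjmx (delta_mx i 0 : 'cV[C]_d) = delta_mx 0 i.
Proof.
apply/matrixP => a b; rewrite !mxE.
by case: (a == 0) (b == i) => [] [] /=; rewrite ?rmorph1 ?rmorph0.
Qed.

Lemma qf_delta (A : 'M[C]_d) i j : qf A (delta_mx i 0) (delta_mx j 0) = A i j.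
Proof. by rewrite /qf adjmx_delta -rowE -colE !mxE. Qed.

Lemma psd_adj (A : 'M[C]_d) : psd A -> adjmx A = A.
Proof.
move=> hA; apply/matrixP => i j; rewrite !mxE.
have := psd_polar (delta_mx j 0) (delta_mx i 0) hA.
by rewrite !qf_delta => ->.
Qed.
Lemma adjmx_row (P : 'M[C]_d) i : adjmx (row i P) = col i (adjmx P).
Proof. by apply/matrixP => a b; rewrite !mxE. Qed.

Lemma psd_conj_diag (A P : 'M[C]_d) i : psd A -> 0 <= (P *m A *m adjmx P) i i.
Proof.
move=> hA; have := hA (adjmx (row i P)); rewrite adjmxK.
suff -> : (P *m A *m adjmx P) i i = (row i P *m A *m adjmx (row i P)) 0 0 by [].
rewrite adjmx_row !mxE; apply: eq_bigr => k _; rewrite !mxE; congr (_ * _).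
by apply: eq_bigr => l _; rewrite !mxE.
Qed.

Lemma tr_psd (A B : 'M[C]_d) : psd A -> psd B -> 0 <= \tr (A *m B).
Proof.
move=> hA hB.
have hN : A \is normalmx by apply/normalmxP; rewrite -adjmxE psd_adj.
have eA : A = invmx (spectralmx A) *m diag_mx (spectral_diag A) *m spectralmx A.
  exact/orthomx_spectralP.
move: eA; set P := spectralmx A; set sp := spectral_diag A => eA.
have uP : P \is unitarymx := spectral_unitarymx A.
rewrite invmx_unitary // -adjmxE in eA.
have PP : P *m adjmx P = 1%:M by rewrite adjmxE; apply/unitarymxP.
have sp_i : forall i, sp 0 i = (P *m A *m adjmx P) i i.
  move=> i; rewrite eA !mulmxA PP mul1mx -mulmxA PP mulmx1 mxE eqxx mulr1n //.
rewrite eA -!mulmxA mxtrace_mulC -!mulmxA mul_diag_mx /mxtrace.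
apply: sumr_ge0 => i _; rewrite !mxE; apply: mulr_ge0.
  by rewrite sp_i; exact: psd_conj_diag.
by have := psd_conj_diag P i hB; rewrite -mulmxA mxE.
Qed.

Lemma outcome_distr m (rho : 'M[C]_d) (M : 'I_m -> 'M[C]_d) :
  density rho -> povm M -> is_distr (fun k => outcome_prob rho (M k)).
Proof.
move=> [hr tr1] [hM sM]; split.
  move=> k; rewrite /outcome_prob.
  have := tr_psd hr (hM k); rewrite lecE => /andP[_]; done.
rewrite /outcome_prob.
have -> : \sum_(k < m) complex.Re (\tr (rho *m M k)) = complex.Re (\sum_(k < m) \tr (rho *m M k)).
  elim/big_rec2: _ => [//|k x y _ ->]; by case: (\tr _) => a b; case: x.
have -> : \sum_(k < m) \tr (rho *m M k) = \tr (rho *m \sum_(k < m) M k).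
  by rewrite mulmx_sumr raddf_sum.
by rewrite sM mulmx1 tr1.
Qed.
End Mat.

Section Prob.
Local Open Scope classical_set_scope.
Variable R : realType.
Variables (dT : measure_display) (T : measurableType dT) (P : probability T R).

Lemma mset_lt (g : T -> R) c : measurable_fun setT g -> measurable [set a | c < g a].
Proof.
move=> hg; have := hg measurableT _ (measurable_itv `]c, +oo[%R); rewrite setTI.
congr measurable; apply/seteqP; split => a /=; rewrite in_itv /= andbT //.
Qed.

Lemma mset_le (g : T -> R) c : measurable_fun setT g -> measurable [set a | c <= g a].
Proof.
move=> hg; have := hg measurableT _ (measurable_itv `[c, +oo[%R); rewrite setTI.
congr measurable; apply/seteqP; split => a /=; rewrite in_itv /= andbT //.
Qed.

Lemma bad_bound (g : T -> R) (beta : R) : measurable_fun setT g -> 0 <= beta ->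
  (forall d' : R, 0 < d' -> (P [set a | (d' <= g a)%R] <= (beta / d' ^+ 2)%:E)%E) ->
  (P [set a | (powR beta 4^-1 < g a)%R] <= (Num.sqrt beta)%:E)%E.
Proof.
move=> mg hb hP.
have [b0|bpos] : beta = 0 \/ 0 < beta.
  by move: hb; rewrite le_eqVlt => /orP[/eqP <-|]; [left|right].
- rewrite b0 powR0 ?invr_eq0 ?pnatr_eq0 // sqrtr0.
  have := @measure_sigma_subadditive _ _ _ P [set a | 0 < g a]
     (fun n => [set a | n.+1%:R^-1 <= g a]) (fun n => mset_le _ mg) (mset_lt _ mg).
  move=> /(_ _) h; apply: le_trans (h _) _.
    move=> a /= ga; exists (Num.truncn (g a)^-1) => //=.
    rewrite invf_ple ?posrE ?ltr0n //.
    by apply: ltW; apply: real_truncnS_gt; rewrite realE ltW // invr_gt0.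
  rewrite eseries0 // => i _ _; apply/le_anti/andP; split; last exact: measure_ge0.
  by apply: le_trans (hP _ _) _; rewrite ?invr_gt0 ?ltr0n // b0 mul0r.
- set t := powR beta 4^-1.
  have t0 : 0 < t := powR_gt0 _ bpos.
  have tt : t ^+ 2 = Num.sqrt beta.
    rewrite -powR_mulrn ?powR_ge0 // /t -powRrM -powR12_sqrt //; congr powR.
    by field.
  apply: (@le_trans _ _ (P [set a | (t <= g a)%R])).
    by apply: le_measure; rewrite ?inE; [exact: mset_lt|exact: mset_le|move=> a /= /ltW].
  apply: le_trans (hP t t0) _.
  have s0 : 0 < Num.sqrt beta by rewrite sqrtr_gt0.
  by rewrite lee_fin tt -{1}(sqr_sqrtr hb) expr2 mulfK // gt_eqF.
Qed.
End Prob.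

Unset Implicit Arguments.
Local Open Scope classical_set_scope.

Theorem theorem2 (R : realType) (dT : measure_display) (T : measurableType dT)
    (P : probability T R) (n m N : nat)
    (rho : T -> 'M[R[i]]_(2 ^ n)) (M : 'I_m -> 'M[R[i]]_(2 ^ n))
    (mu : 'I_m -> R) (beta : R) :
  (forall a, density (rho a)) ->
  povm M ->
  is_distr mu ->
  (forall k, measurable_fun setT (fun a => outcome_prob (rho a) (M k))) ->
  0 <= beta ->
  (forall (k : 'I_m) (d' : R), 0 < d' ->
     (P [set a | (d' <= `|outcome_prob (rho a) (M k) - mu k|)%R]
       <= (beta / d' ^+ 2)%:E)%E) ->
  exists G : set T,
    [/\ measurable G,
        ((1 - m%:R * Num.sqrt beta)%:E <= P G)%E &
        forall a, G a ->
          forall f : {ffun 'I_N -> 'I_m} -> R, decision_rule f ->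
            success_prob (fun k => outcome_prob (rho a) (M k)) mu f
              <= 2^-1 + N%:R * m%:R * powR beta 4^-1 / 4].
Proof.
move=> hrho hM hmu hx hb hP.
pose g (k : 'I_m) a := `|outcome_prob (rho a) (M k) - mu k|.
have mg : forall k, measurable_fun setT (g k).
  move=> k; apply: measurableT_comp; first exact: normr_measurable.
  by apply: measurable_funB => //; exact: measurable_cst.
pose t := powR beta 4^-1.
have bad : forall k, (P [set a | (t < g k a)%R] <= (Num.sqrt beta)%:E)%E.
  by move=> k; apply: bad_bound => // d' d0; exact: hP.
pose F (j : nat) : set T :=
  if (insub j : option 'I_m) is Some k then [set a | (t < g k a)%R] else set0.
have mF : forall j, measurable (F j).
  by move=> j; rewrite /F; case: insub => [k|] //; exact: mset_lt.
have Fk : forall k : 'I_m, F k = [set a | (t < g k a)%R] by move=> k; rewrite /F valK.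
pose B := \big[setU/set0]_(j < m) F j.
have mB : measurable B by apply: bigsetU_measurable => j _.
exists (~` B); split.
- exact: measurableC.
- rewrite probability_setC //.
  have PB : (P B <= (m%:R * Num.sqrt beta)%:E)%E.
    have Bsub : B `<=` \big[setU/set0]_(k < m) F k by [].
    have h := @content_subadditive _ _ _ P B F m (fun k _ => mF k) mB Bsub.
    apply: le_trans h _.
    under eq_bigr => k _ do rewrite Fk.
    apply: (@le_trans _ _ (\sum_(k < m) (Num.sqrt beta)%:E)%E); first by apply: lee_sum => k _; exact: bad.
    by rewrite sumEFin sumr_const card_ord mulr_natl.
  have PB0 : (0 <= P B)%E := measure_ge0 _ _.
  move: PB PB0; case: (P B) => [r| |] //= PB PB0.
  rewrite -EFinB lee_fin; rewrite lee_fin in PB; lra.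
- move=> a nB f hf.
  apply: det_bound => //; first exact: outcome_distr (hrho a) hM.
  move=> k; rewrite leNgt; apply/negP => hk; apply: nB.
  rewrite /B -bigcup_mkord; exists (nat_of_ord k) => //=.
  by rewrite Fk.
Qed.
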